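(* Let $n\ge 3$, let $F$ be a set of edges of $Q_n$, and let $T$ be a proper subset of the vertex set of $Q_n$ with $|T|\ge 3$ and $|T|_0\ge|T|_1$, such that every edge of $Q_n$ joining a vertex of parity 0 in $T$ to a vertex outside $T$ belongs to $F$. Suppose $T$ is partitioned into two sets $T_1,T_2$, each inducing a connected subgraph of $Q_n$ and each balanced ($|T_j|_0=|T_j|_1$ for $j=1,2$), and suppose there are adjacent vertices $v_1\in T_1$, $v_2\in T_2$ such that every path in the subgraph induced by $T$ from $v_1$ to $v_2$ uses the edge $(v_1,v_2)$. Then $F$ is not minimal.
   Context: $Q_n$ is the $n$-dimensional hypercube on the binary strings of length $n$, two strings adjacent iff they differ in exactly one bit. The parity of a vertex is the number of ones in its label modulo 2. For a set $T$ of vertices, $|T|_0$ and $|T|_1$ denote the numbers of vertices of parity 0 and parity 1 in $T$. $F$ is a set of ''faulty'' edges; $Q_n-F$ is the graph with all vertices of $Q_n$ and the edges of $Q_n$ not in $F$. ''$F$ is not minimal'' means that there is a proper subset $F'\subsetneq F$ such that $Q_n-F'$ has no Hamiltonian cycle. *)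

(* Defs.v *)
From mathcomp Require Import all_boot.
Set Implicit Arguments. Unset Strict Implicit. Unset Printing Implicit Defensive.

Definition vert (n : nat) : finType := {ffun 'I_n -> bool}.

Definition hadj (n : nat) : rel (vert n) :=
  fun x y => #|[set i | x i != y i]| == 1.

Definition par (n : nat) (x : vert n) : bool := odd #|[set i | x i]|.

Definition cnt0 (n : nat) (T : {set vert n}) : nat := #|[set x in T | ~~ par x]|.
Definition cnt1 (n : nat) (T : {set vert n}) : nat := #|[set x in T | par x]|.

(* Edges of Q_n are represented as two-element vertex sets {x, y}. *)
Definition is_qedge (n : nat) (e : {set vert n}) : bool :=
  [exists x, exists y, hadj x y && (e == [set x; y])].

Definition adjF (n : nat) (F : {set {set vert n}}) : rel (vert n) :=
  fun x y => hadj x y && ([set x; y] \notin F).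

Definition ham_cycle (n : nat) (F : {set {set vert n}}) (c : seq (vert n)) : bool :=
  [&& uniq c, [forall x, x \in c] & cycle (adjF F) c].

Definition hamiltonian (n : nat) (F : {set {set vert n}}) : Prop :=
  exists c, ham_cycle F c.

Definition not_minimal (n : nat) (F : {set {set vert n}}) : Prop :=
  exists F' : {set {set vert n}}, F' \proper F /\ ~ hamiltonian F'.

Definition induced (n : nat) (S : {set vert n}) : rel (vert n) :=
  fun x y => [&& hadj x y, x \in S & y \in S].

Definition induced_connected (n : nat) (S : {set vert n}) : Prop :=
  forall x y, x \in S -> y \in S -> connect (induced S) x y.

(* Main.v *)
Require Import Defs.
From mathcomp Require Import all_boot zify.
Set Implicit Arguments. Unset Strict Implicit. Unset Printing Implicit Defensive.

Definition flip n (x : vert n) (i : 'I_n) : vert n :=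
  [ffun j => if j == i then ~~ x j else x j].

Lemma hadj_flip n (x : vert n) i : hadj x (flip x i).
Proof.
rewrite /hadj; have -> : [set j | x j != flip x i j] = [set i].
  apply/setP => j; rewrite !inE ffunE; case: (eqVneq j i) => [->|_].
    by case: (x i).
  by rewrite eqxx.
by rewrite cards1.
Qed.

Lemma hadjP n (x y : vert n) : hadj x y -> exists i, y = flip x i.
Proof.
move/cards1P => [i Hi]; exists i; apply/ffunP => j; rewrite ffunE.
move/setP: Hi => /(_ j); rewrite !inE.
by case: (j == i); case: (x j); case: (y j).
Qed.

Lemma flip_inj n (x : vert n) : injective (flip x).
Proof.
move=> i k /ffunP/(_ i); rewrite !ffunE eqxx; case: eqP => [//|_].
by case: (x i).
Qed.

Lemma card_nbr n (x : vert n) : #|[set y | hadj x y]| = n.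
Proof.
have -> : [set y | hadj x y] = flip x @: [set: 'I_n].
  apply/setP => y; rewrite inE; apply/idP/imsetP.
    by move/hadjP => [i ->]; exists i.
  by move=> [i _ ->]; apply: hadj_flip.
by rewrite card_imset ?cardsT ?card_ord //; apply: flip_inj.
Qed.

Lemma par_flip n (x : vert n) i : par (flip x i) = ~~ par x.
Proof.
rewrite /par.
have E: [set j | flip x i j] :\ i = [set j | x j] :\ i.
  by apply/setP=> j; rewrite !inE ffunE; case: eqP.
rewrite (cardsD1 i [set j | flip x i j]) (cardsD1 i [set j | x j]) E !inE ffunE eqxx.
by case: (x i); rewrite ?add1n ?add0n /= ?negbK.
Qed.

Lemma par_adj n (x y : vert n) : hadj x y -> par y = ~~ par x.
Proof. by move/hadjP => [i ->]; apply: par_flip. Qed.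

Lemma hadj_sym n (x y : vert n) : hadj x y = hadj y x.
Proof.
rewrite /hadj; have -> // : [set i | x i != y i] = [set i | y i != x i].
by apply/setP => i; rewrite !inE eq_sym.
Qed.

Lemma card_sum (T : finType) (B : {set T}) (P : pred T) :
  #|[set y in B | P y]| = \sum_(y in B) (P y : nat).
Proof.
rewrite -sum1dep_card big_mkcondr /=; apply: eq_bigr => y _.
by case: (P y).
Qed.

Lemma imset_eq (T : finType) (h : T -> T) (A B : {set T}) :
  injective h -> h @: A \subset B -> #|B| <= #|A| -> h @: A = B.
Proof. by move=> hi sub le; apply/eqP; rewrite eqEcard sub card_imset. Qed.

Lemma cycle_closed (T : finType) (c : seq T) (X : {set T}) y0 p :
  c = y0 :: p -> uniq c -> y0 \in X ->
  (forall x, x \in X -> next c x \in X) -> forall z, z \in c -> z \in X.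
Proof.
move=> Ec Uc Hy0 Hcl.
suff H: forall i, i < size c -> nth y0 c i \in X.
  by move=> z Hz; rewrite -(nth_index y0 Hz); apply: H; rewrite index_mem.
elim => [|i IH] Hi; first by rewrite Ec.
have Hi' : i < size c by apply: ltnW.
have := Hcl _ (IH Hi'); rewrite next_nth mem_nth // index_uniq // Ec /=.
by [].
Qed.

Lemma no_ham n (F : {set {set vert n}}) (S : {set vert n}) x0 z0 :
  x0 \in S -> z0 \notin S -> cnt1 S <= cnt0 S ->
  (forall x y, x \in S -> ~~ par x -> y \notin S -> hadj x y -> [set x; y] \in F) ->
  ~ hamiltonian F.
Proof.
move=> Hx0 Hz0 Hcnt HF [c /and3P [Uc /forallP Hall Hcyc]].
pose f := next c; pose g := prev c.
have fK : cancel f g := prev_next Uc.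
have gK : cancel g f := next_prev Uc.
pose S0 := [set x in S | ~~ par x]; pose S1 := [set x in S | par x].
have stepf : forall x, x \in S0 -> f x \in S1.
  move=> x; rewrite !inE => /andP [xS px].
  have := next_cycle Hcyc (Hall x); rewrite /adjF => /andP [hxy nF].
  have fS : f x \in S by apply: contraR nF => fnS; apply: HF.
  by rewrite fS (par_adj hxy) px.
have stepg : forall x, x \in S0 -> g x \in S1.
  move=> x; rewrite !inE => /andP [xS px].
  have := prev_cycle Hcyc (Hall x); rewrite /adjF hadj_sym setUC => /andP [hxy nF].
  have gS : g x \in S by apply: contraR nF => gnS; apply: HF.
  by rewrite gS (par_adj hxy) px.
have eqf : f @: S0 = S1.
  apply: imset_eq; [exact: can_inj fK| |exact: Hcnt].
  by apply/subsetP => y /imsetP [x xS0 ->]; apply: stepf.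
have eqg : g @: S0 = S1.
  apply: imset_eq; [exact: can_inj gK| |exact: Hcnt].
  by apply/subsetP => y /imsetP [x xS0 ->]; apply: stepg.
have S1S : forall x, x \in S1 -> x \in S by move=> x; rewrite inE => /andP [].
have S0S : forall x, x \in S0 -> x \in S by move=> x; rewrite inE => /andP [].
have clS : forall x, x \in S -> f x \in S.
  move=> x xS; case px: (par x).
    have : x \in S1 by rewrite inE xS px.
    by rewrite -eqg => /imsetP [z zS0 ->]; rewrite gK; apply: S0S.
  by apply: S1S; apply: stepf; rewrite inE xS px.
have clC : forall x, x \in ~: S -> f x \in ~: S.
  move=> x; rewrite !inE; apply: contra => fxS; case px: (par (f x)).
    have : f x \in S1 by rewrite inE fxS px.
    by rewrite -eqf => /imsetP [z zS0 /(can_inj fK) ->]; apply: S0S.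
  by rewrite -(fK x); apply: S1S; apply: stepg; rewrite inE fxS px.
case Ec: c Uc Hall => [|y0 p] Uc' Hall'; first by have := Hall' x0.
rewrite -Ec in Uc'.
case: (boolP (y0 \in S)) => Hy0.
  have Hz : z0 \in c by rewrite Ec.
  by have := cycle_closed Ec Uc' Hy0 clS Hz; rewrite (negbTE Hz0).
have Hy0' : y0 \in ~: S by rewrite inE.
have Hx : x0 \in c by rewrite Ec.
by have := cycle_closed Ec Uc' Hy0' clC Hx; rewrite inE Hx0.
Qed.

Lemma flipC n (v : vert n) i j : flip (flip v i) j = flip (flip v j) i.
Proof.
apply/ffunP => l; rewrite !ffunE.
by case: (l == i); case: (l == j).
Qed.

Lemma sum_ind (T : finType) (A : {set T}) a : a \in A ->
  \sum_(x in A) ((x == a) : nat) = 1.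
Proof.
move=> aA; rewrite -card_sum.
have -> : [set x in A | x == a] = [set a].
  by apply/setP => x; rewrite !inE; case: (eqVneq x a) => [->|]; rewrite ?aA ?andbF.
by rewrite cards1.
Qed.

Lemma dcount (T : finType) (A B : {set T}) (r : rel T) :
  \sum_(x in A) #|[set y in B | r x y]| = \sum_(y in B) #|[set x in A | r x y]|.
Proof.
under eq_bigr => x _ do rewrite card_sum.
rewrite exchange_big; apply: eq_bigr => y _.
by rewrite card_sum.
Qed.

Lemma degenerate n (Ta Tb : {set vert n}) v w : 3 <= n ->
  [disjoint Ta & Tb] -> cnt0 Ta = cnt1 Ta -> v \in Ta -> w \in Tb ->
  ~~ par v -> hadj v w ->
  (forall a b, a \in Ta -> b \in Tb -> hadj a b -> a = v /\ b = w) ->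
  (forall x y, x \in Ta -> ~~ par x -> hadj x y -> y \in Ta :|: Tb) -> False.
Proof.
move=> n3 dis bal vA wB pv hvw cross nbT.
pose A0 := [set x in Ta | ~~ par x]; pose A1 := [set x in Ta | par x].
have nbA : forall x y, x \in A0 -> hadj x y -> y != w -> y \in A1.
  move=> x y; rewrite !inE => /andP [xA px] hxy ynw.
  move: (nbT x y xA px hxy); rewrite inE => /orP [yA|yB].
    by rewrite yA (par_adj hxy) px.
  by case: (cross x y xA yB hxy) => _ yw; rewrite yw eqxx in ynw.
pose g x := #|[set y in A1 | hadj x y]|.
pose h y := #|[set x in A0 | hadj x y]|.
have gb : forall x, x \in A0 -> n <= g x + (x == v).
  move=> x xA0; apply: (@leq_trans #|[set y | hadj x y]|); first by rewrite card_nbr.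
  rewrite (cardsD1 w) addnC inE.
  apply: leq_add.
    apply: subset_leq_card; apply/subsetP => y; rewrite !inE => /andP [ynw hxy].
    by rewrite hxy andbT; have := nbA x y xA0 hxy ynw; rewrite inE.
  case hxw: (hadj x w) => //=.
  move: xA0; rewrite inE => /andP [xA _].
  by case: (cross x w xA wB hxw) => -> _; rewrite eqxx.
have hb : forall y, h y <= n.
  move=> y; apply: (@leq_trans #|[set x | hadj y x]|); last by rewrite card_nbr.
  apply: subset_leq_card; apply/subsetP => x.
  by rewrite !inE hadj_sym => /andP [_ ->].
have hb1 : forall y c, hadj y c -> c \notin A0 -> h y + 1 <= n.
  move=> y c hyc cA; apply: (@leq_trans #|[set x | hadj y x]|); last by rewrite card_nbr.
  rewrite (cardsD1 c) inE hyc addnC /= leq_add2l.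
  apply: subset_leq_card; apply/subsetP => x; rewrite !inE hadj_sym.
  move=> /andP [xA0 ->]; rewrite andbT; apply: contraNneq cA => <-.
  by move: xA0; rewrite inE.
have [j wE] := hadjP hvw.
have : 0 < #|[set~ j]| by rewrite cardsC1 card_ord; lia.
case/card_gt0P => i; rewrite !inE => ij.
have : 0 < #|[set~ j] :\ i|.
  have := cardsD1 i [set~ j]; rewrite cardsC1 card_ord !inE ij.
  move=> E; lia.
case/card_gt0P => k; rewrite !inE => /andP [ki kj].
pose a := flip v i; pose b := flip v k.
have vA0 : v \in A0 by rewrite inE vA pv.
have aA1 : a \in A1.
  apply: (nbA v) => //; first exact: hadj_flip.
  by rewrite wE; apply/eqP => /flip_inj /eqP; rewrite (negbTE ij).
have bA1 : b \in A1.
  apply: (nbA v) => //; first exact: hadj_flip.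
  by rewrite wE; apply/eqP => /flip_inj /eqP; rewrite (negbTE kj).
have ab : a != b by apply/eqP => /flip_inj /eqP; rewrite eq_sym (negbTE ki).
have notA0 : forall l, l != j -> flip (flip v l) j \notin A0.
  move=> l lj; rewrite flipC inE; apply/andP => [[cA _]].
  have hwc : hadj (flip (flip v j) l) w by rewrite hadj_sym wE; apply: hadj_flip.
  case: (cross _ _ cA wB hwc) => /ffunP /(_ l); rewrite !ffunE eqxx (negbTE lj).
  by case: (v l).
have ha : h a + 1 <= n := hb1 a _ (hadj_flip a j) (notA0 i ij).
have hbb : h b + 1 <= n := hb1 b _ (hadj_flip b j) (notA0 k kj).
have dc := dcount A0 A1 (@hadj n).
have L : #|A0| * n <= \sum_(x in A0) g x + 1.
  rewrite -sum_nat_const -(sum_ind vA0) -big_split /=.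
  by apply: leq_sum => x xA0; apply: gb.
have R : \sum_(y in A1) h y + 1 + 1 <= #|A1| * n.
  rewrite -sum_nat_const -{1}(sum_ind aA1) -(sum_ind bA1) -!big_split /=.
  apply: leq_sum => y yA1.
  case: (eqVneq y a) => [->|ya]; first by rewrite ?eqxx ?(negbTE ab) /= ?addn0.
  case: (eqVneq y b) => [->|yb]; first by rewrite ?eqxx /= ?addn0.
  by rewrite /= !addn0 hb.
have eA : #|A0| = #|A1| by [].
rewrite /g /h in L R.
rewrite dc eA in L.
by have := leq_trans R L; rewrite -addnA leq_add2l.
Qed.

Lemma core n (F : {set {set vert n}}) (Ta Tb : {set vert n}) v w : 3 <= n ->
  (forall x y, x \in Ta :|: Tb -> ~~ par x -> y \notin Ta :|: Tb -> hadj x y ->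
     [set x; y] \in F) ->
  [disjoint Ta & Tb] -> cnt0 Ta = cnt1 Ta -> cnt0 Tb = cnt1 Tb ->
  v \in Ta -> w \in Tb -> ~~ par v -> hadj v w ->
  (forall a b, a \in Ta -> b \in Tb -> hadj a b -> a = v /\ b = w) ->
  not_minimal F.
Proof.
move=> n3 HF dis balA balB vA wB pv hvw cross.
case: (boolP [exists x, exists y, [&& x \in Ta, ~~ par x, y \notin Ta :|: Tb & hadj x y]]).
  case/existsP => x /existsP [y /and4P [xA px yT hxy]].
  exists [set e in F | [forall z in Ta, ~~ par z ==> (z \notin e)]]; split.
    apply/properP; split.
      by apply/subsetP => e; rewrite inE => /andP [].
    exists [set x; y]; first by apply: HF => //; rewrite inE xA.
    rewrite inE negb_and; apply/orP; right; apply/negP => /forallP /(_ x).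
    by rewrite xA px set21.
  have vnB : v \notin Tb by rewrite (disjointFr dis vA).
  have pw : par w by rewrite (par_adj hvw) pv.
  apply: (@no_ham _ _ Tb w v) => //; first by rewrite balB.
  move=> x' y' xB px' ynB hxy'.
  have ynA : y' \notin Ta.
    apply/negP => yA; rewrite hadj_sym in hxy'.
    by case: (cross y' x' yA xB hxy') => _ E; rewrite E pw in px'.
  rewrite inE; apply/andP; split.
    by apply: HF => //; rewrite !inE ?xB ?orbT // negb_or ynA.
  apply/forallP => z; apply/implyP => zA; apply/implyP => _.
  rewrite !inE negb_or; apply/andP; split.
    by apply/eqP => E; rewrite -E (disjointFr dis zA) in xB.
  by apply/eqP => E; rewrite -E zA in ynA.
move=> H; exfalso.
apply: (degenerate n3 dis balA vA wB pv hvw cross).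
move=> x y xA px hxy; apply: contraR H => yn.
apply/existsP; exists x; apply/existsP; exists y.
by rewrite xA px yn hxy.
Qed.

Lemma zip_split (T : Type) (x : T) p q :
  zip (x :: p ++ q) (p ++ q) = zip (x :: p) p ++ zip (last x p :: q) q.
Proof. by elim: p x => [|y p IH] x //=; rewrite IH. Qed.

Lemma path_in n (S : {set vert n}) x p : path (induced S) x p ->
  all (fun xy : vert n * vert n => (xy.1 \in S) && (xy.2 \in S)) (zip (x :: p) p).
Proof.
elim: p x => [|y p IH] x //= /andP [/and3P [_ xS yS] P].
by rewrite xS yS /=; apply: IH.
Qed.

Lemma set2_mem n (S : {set vert n}) x y u :
  x \in S -> y \in S -> u \in [set x; y] -> u \in S.
Proof. by rewrite !inE => xS yS /orP [/eqP->|/eqP->]. Qed.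

Theorem lemma4 (n : nat) (F : {set {set vert n}}) (T T1 T2 : {set vert n})
  (v1 v2 : vert n) :
  3 <= n ->
  (forall e, e \in F -> is_qedge e) ->
  T \proper [set: vert n] ->
  3 <= #|T| ->
  cnt1 T <= cnt0 T ->
  (forall x y, x \in T -> ~~ par x -> y \notin T -> hadj x y -> [set x; y] \in F) ->
  T1 :|: T2 = T -> [disjoint T1 & T2] ->
  induced_connected T1 -> induced_connected T2 ->
  cnt0 T1 = cnt1 T1 -> cnt0 T2 = cnt1 T2 ->
  v1 \in T1 -> v2 \in T2 -> hadj v1 v2 ->
  (forall p : seq (vert n), path (induced T) v1 p -> last v1 p = v2 ->
     has (fun xy : vert n * vert n => [set xy.1; xy.2] == [set v1; v2])
         (zip (v1 :: p) p)) ->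
  not_minimal F.
Proof.
move=> n3 _ _ _ _ HF TU dis c1 c2 b1 b2 v1T1 v2T2 hv Hpath.
have sub1 : subrel (induced T1) (induced T).
  move=> x y /and3P [h xS yS]; by rewrite /induced h -TU !inE xS yS.
have sub2 : subrel (induced T2) (induced T).
  move=> x y /and3P [h xS yS]; by rewrite /induced h -TU !inE xS yS !orbT.
have cross : forall a b, a \in T1 -> b \in T2 -> hadj a b -> a = v1 /\ b = v2.
  move=> a b aT1 bT2 hab.
  case: (boolP ((a == v1) && (b == v2))) => [/andP [/eqP -> /eqP ->] //|ne].
  exfalso.
  have [p1 P1 L1] := connectP (c1 v1 a v1T1 aT1).
  have [p2 P2 L2] := connectP (c2 b v2 bT2 v2T2).
  have P : path (induced T) v1 (p1 ++ b :: p2).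
    rewrite cat_path (sub_path sub1 P1) /= -L1.
    have aT : a \in T by rewrite -TU inE aT1.
    have bT : b \in T by rewrite -TU inE bT2 orbT.
    rewrite {1}/induced hab aT bT /=.
    exact: (sub_path sub2 P2).
  have L : last v1 (p1 ++ b :: p2) = v2 by rewrite last_cat -L1 /= -L2.
  move: (Hpath _ P L); rewrite zip_split -L1 /= has_cat /=.
  have A1 := path_in P1; have A2 := path_in P2.
  case/orP => [/hasP [xy /(allP A1) /andP [x1 x2] /eqP E]|].
    have := set22 v1 v2; rewrite -E => /(set2_mem x1 x2).
    by rewrite (disjointFl dis v2T2).
  case/orP => [/eqP E|/hasP [xy /(allP A2) /andP [x1 x2] /eqP E]].
    have := set21 v1 v2; rewrite -E !inE => /orP [/eqP Ea|/eqP Eb].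
      have := set22 v1 v2; rewrite -E !inE => /orP [/eqP Ea'|/eqP Eb'].
        by rewrite Ea' (disjointFr dis aT1) in v2T2.
      by rewrite -Ea -Eb' !eqxx in ne.
    by rewrite Eb (disjointFl dis bT2) in v1T1.
  have := set21 v1 v2; rewrite -E => /(set2_mem x1 x2).
  by rewrite (disjointFr dis v1T1).
have HF' : forall x y, x \in T1 :|: T2 -> ~~ par x -> y \notin T1 :|: T2 ->
    hadj x y -> [set x; y] \in F by rewrite TU.
case pv1: (par v1).
  have pv2 : ~~ par v2 by rewrite (par_adj hv) pv1.
  apply: (@core _ _ T2 T1 v2 v1) => //.
  - by move=> x y; rewrite setUC; apply: HF'.
  - by rewrite disjoint_sym.
  - by rewrite hadj_sym.
  - move=> a b aT2 bT1 hab; rewrite hadj_sym in hab.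
    by case: (cross b a bT1 aT2 hab) => -> ->.
apply: (@core _ _ T1 T2 v1 v2) => //.
by rewrite pv1.
Qed.
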